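(* Let $m,n\ge 1$ and $1\le r<n$ be integers. Let $J\in\mathbb{C}^{m\times m}$ be unitary, let $p_1,\dots,p_n\in\mathbb{C}$, and let $H_1,\dots,H_n\in\mathbb{C}^{m}$ (column vectors) be nonzero with $H_i^\dagger H_i=-(p_i+p_i^* )$ for every $i$ (so $\mathrm{Re}\,p_i<0$). Define the first-order cavity transfer function matrices $$\tilde K_i(s)=I+\frac{H_iH_i^\dagger}{p_i-s},\qquad i=1,\dots,n,$$ the transfer function matrix $K(s)=J\tilde K_n(s)\tilde K_{n-1}(s)\cdots\tilde K_1(s)$, and the approximation $$K_a(s)=J_a\,\tilde K_r(s)\tilde K_{r-1}(s)\cdots\tilde K_1(s),\qquad J_a=J\,\tilde K_n(0)\tilde K_{n-1}(0)\cdots\tilde K_{r+1}(0).$$ Then $K_a(s)$ is physically realizable (it is lossless bounded real and admits a physically realizable state space realization), and the error $K_e(s)=K(s)-K_a(s)$ satisfies $$\|K_e(j\omega)\|\le\sum_{k=1}^{n-r}B_k(\omega)\quad\text{for all }\omega\ge 0,$$ where $\|\cdot\|$ is the induced (spectral) matrix norm, $j$ is the imaginary unit, and $$B_k(\omega)=\omega\sum_{r+1\le i_1<i_2<\dots<i_k\le n}C_{i_1,\dots,i_k}(\omega),$$ $$C_{i_1,\dots,i_k}(\omega)=\left|\sum_{q=0}^{k-1}(-j\omega)^{k-1-q}\,e_q(p_{i_1},\dots,p_{i_k})\right|\cdot\frac{\prod_{l=1}^k\big(-(p_{i_l}+p_{i_l}^* )\big)}{\prod_{l=1}^k|p_{i_l}|\,|p_{i_l}-j\omega|},$$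 with $e_q$ the $q$-th elementary symmetric polynomial ($e_0=1$).
   Context: A linear quantum system is given by $da=Fa\,dt+G\,du$, $dy=\bar H a\,dt+J\,du$ with $F\in\mathbb{C}^{n\times n}$, $G\in\mathbb{C}^{n\times m}$, $\bar H\in\mathbb{C}^{m\times n}$, $J\in\mathbb{C}^{m\times m}$; its transfer function is $\bar H(sI-F)^{-1}G+J$. It is physically realizable if there exist $\Theta=\Theta^\dagger>0$, $\Lambda$, $M=M^\dagger$, $S$ with $S^\dagger S=I$ such that $F=-\Theta(iM+\tfrac12\Lambda^\dagger\Lambda)$, $G=-\Theta\Lambda^\dagger S$, $\bar H=\Lambda$, $J=S$; equivalently, there is $\Theta=\Theta^\dagger>0$ with $F\Theta+\Theta F^\dagger+GG^\dagger=0$, $G=-\Theta\bar H^\dagger J$, $J^\dagger J=I$. A transfer function matrix $\Phi(s)$ realized by $(F,G,\bar H,J)$ is lossless bounded real if $F$ is Hurwitz and $\Phi(i\omega)^\dagger\Phi(i\omega)=I$ for all real $\omega$. $^\dagger$ denotes conjugate transpose and $^*$ complex conjugation. Each $\tilde K_i$ is the transfer function of the generalized cavity $da_i=p_ia_i\,dt-H_i^\dagger du$, $dy=H_ia_i\,dt+du$. *)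

(* Defs.v *)
(* Complex numbers are modelled by an arbitrary
   numClosedFieldType C (e.g. algC). *)
From HB Require Import structures.
From mathcomp Require Import all_boot all_order all_algebra.
From mathcomp Require Export spectral.
Set Implicit Arguments. Unset Strict Implicit. Unset Printing Implicit Defensive.
Import Order.TTheory GRing.Theory Num.Theory.
Local Open Scope ring_scope.
Local Open Scope sesquilinear_scope.

Section Defs.
Variable C : numClosedFieldType.

Definition mprod (m : nat) (l : seq 'M[C]_m) : 'M[C]_m := foldr mulmx 1%:M l.

Definition Kt (m : nat) (p : nat -> C) (H : nat -> 'cV[C]_m) (i : nat) (s : C)
  : 'M[C]_m := 1%:M + (p i - s)^-1 *: (H i *m (H i)^t*).

Definition Kfull (m n : nat) (J : 'M[C]_m) p H (s : C) : 'M[C]_m :=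
  J *m mprod [seq Kt p H i s | i <- rev (iota 1 n)].

Definition Ja (m n r : nat) (J : 'M[C]_m) p H : 'M[C]_m :=
  J *m mprod [seq Kt p H i 0 | i <- rev (iota r.+1 (n - r))].

Definition Kapprox (m n r : nat) (J : 'M[C]_m) p H (s : C) : 'M[C]_m :=
  Ja n r J p H *m mprod [seq Kt p H i s | i <- rev (iota 1 r)].

Definition tf (N m : nat) (F : 'M[C]_N) (G : 'M[C]_(N, m)) (Hb : 'M[C]_(m, N))
  (Jr : 'M[C]_m) (s : C) : 'M[C]_m :=
  Hb *m invmx (s%:M - F) *m G + Jr.

Definition posdefmx (N : nat) (T : 'M[C]_N) : Prop :=
  T^t* = T /\ forall v : 'cV[C]_N, v != 0 -> 0 < (v^t* *m T *m v) 0 0.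

(* physical realizability (second, equivalent characterization of the paper) *)
Definition phys_realizable (N m : nat) (F : 'M[C]_N) (G : 'M[C]_(N, m))
  (Hb : 'M[C]_(m, N)) (Jr : 'M[C]_m) : Prop :=
  exists T : 'M[C]_N, [/\ posdefmx T,
     F *m T + T *m F^t* + G *m G^t* = 0,
     G = - (T *m Hb^t* *m Jr) &
     Jr^t* *m Jr = 1%:M].

Definition hurwitz (N : nat) (F : 'M[C]_N) : Prop :=
  forall l : C, eigenvalue F l -> 'Re l < 0.

Definition lossless_bounded_real (N m : nat) (F : 'M[C]_N) (G : 'M[C]_(N, m))
  (Hb : 'M[C]_(m, N)) (Jr : 'M[C]_m) : Prop :=
  hurwitz F /\
  forall w : C, w \is Num.real ->
    (tf F G Hb Jr ('i * w))^t* *m tf F G Hb Jr ('i * w) = 1%:M.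

Definition vnorm (m : nat) (v : 'cV[C]_m) : C := sqrtC (\sum_i `|v i 0| ^+ 2).

Definition specnorm_le (m : nat) (A : 'M[C]_m) (b : C) : Prop :=
  forall v : 'cV[C]_m, vnorm (A *m v) <= b * vnorm v.

Definition esym (n : nat) (p : nat -> C) (S : {set 'I_n.+1}) (q : nat) : C :=
  \sum_(T : {set 'I_n.+1} | (T \subset S) && (#|T| == q)) \prod_(i in T) p i.

Definition Cterm (n : nat) (p : nat -> C) (S : {set 'I_n.+1}) (w : C) : C :=
  `| \sum_(q < #|S|) (- ('i * w)) ^+ (#|S|.-1 - q) * esym p S q | *
  (\prod_(l in S) (- (p l + (p l)^*))) /
  (\prod_(l in S) (`|p l| * `|p l - 'i * w|)).

Definition Bterm (n r : nat) (p : nat -> C) (k : nat) (w : C) : C :=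
  w * \sum_(S : {set 'I_n.+1} | (#|S| == k) && [forall i in S, (r < i)%N]) Cterm p S w.

End Defs.

(* Main.v *)
Require Import Defs.
From HB Require Import structures.
From mathcomp Require Import all_boot all_order all_algebra.
From mathcomp Require Import ring zify.
Set Implicit Arguments. Unset Strict Implicit. Unset Printing Implicit Defensive.
Import Order.TTheory GRing.Theory Num.Theory.
Local Open Scope ring_scope.
Local Open Scope sesquilinear_scope.



Section VN.
Variable C : numClosedFieldType.
Variable m : nat.
Implicit Types u v w : 'cV[C]_m.

Definition nq v : C := \sum_i `|v i 0| ^+ 2.
Definition ip u v : C := \sum_i (u i 0)^* * v i 0.

Lemma vnormE v : vnorm v = sqrtC (nq v). Proof. by []. Qed.

Lemma nq_ge0 v : 0 <= nq v.
Proof. by apply: sumr_ge0 => i _; rewrite exprn_ge0. Qed.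

Lemma nq_ip v : nq v = ip v v.
Proof. by apply: eq_bigr => i _; rewrite normCKC. Qed.

Lemma ipC u v : ip v u = (ip u v)^*.
Proof. rewrite /ip rmorph_sum; apply: eq_bigr => i _; by rewrite rmorphM /= conjCK mulrC. Qed.

Lemma ipBl u v w : ip (u - v) w = ip u w - ip v w.
Proof. rewrite /ip -sumrB; apply: eq_bigr => i _; by rewrite !mxE rmorphB mulrBl. Qed.

Lemma ipBr u v w : ip w (u - v) = ip w u - ip w v.
Proof. rewrite /ip -sumrB; apply: eq_bigr => i _; by rewrite !mxE mulrBr. Qed.

Lemma ipDl u v w : ip (u + v) w = ip u w + ip v w.
Proof. rewrite /ip -big_split; apply: eq_bigr => i _; by rewrite !mxE rmorphD mulrDl. Qed.

Lemma ipZl a u v : ip (a *: u) v = a^* * ip u v.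
Proof. rewrite /ip mulr_sumr; apply: eq_bigr => i _; by rewrite !mxE rmorphM mulrA. Qed.

Lemma ipZr a u v : ip u (a *: v) = a * ip u v.
Proof. rewrite /ip mulr_sumr; apply: eq_bigr => i _; rewrite !mxE; ring. Qed.

Lemma ipE u v : ip u v = (u^t* *m v) 0 0.
Proof. rewrite mxE; apply: eq_bigr => i _; by rewrite !mxE. Qed.

Lemma nq_eq0 v : nq v = 0 -> v = 0.
Proof.
move=> /eqP; rewrite psumr_eq0; last by move=> i _; rewrite exprn_ge0.
move=> /allP H; apply/matrixP => i j; rewrite (ord1 j) mxE.
have := H i (mem_index_enum i); rewrite /= expf_eq0 normr_eq0 => /andP[_ /eqP ->] //.
Qed.

Lemma CS u v : `|ip u v| ^+ 2 <= nq u * nq v.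
Proof.
have [a0|] := eqVneq (nq u) 0.
  have -> : u = 0 by apply: nq_eq0.
  have -> : ip 0 v = 0 by rewrite /ip big1 // => i _; rewrite mxE rmorph0 mul0r.
  by rewrite normr0 expr0n /= mulr_ge0 ?nq_ge0.
move=> a0; have agt0 : 0 < nq u by rewrite lt_def a0 nq_ge0.
set a := nq u; set b := nq v; set c := ip u v.
have ar : a^* = a by rewrite conj_Creal // ger0_real // ltW.
have := nq_ge0 (a *: v - c *: u).
rewrite nq_ip !(ipBl, ipBr, ipZl, ipZr) -!nq_ip -/a -/b -/c ar (ipC u v) -/c.
have -> : a * (a * b - c * c^*) - c^* * (a * c - c * a) =
          a * (a * b - c^* * c) by ring.
rewrite pmulr_rge0 // subr_ge0 normCKC //.
Qed.

Lemma sqrtC_nq_sq v : sqrtC (nq v) ^+ 2 = nq v. Proof. exact: sqrtCK. Qed.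

Lemma vnorm_ge0 v : 0 <= vnorm v. Proof. by rewrite sqrtC_ge0 nq_ge0. Qed.

Lemma CS' u v : `|ip u v| <= vnorm u * vnorm v.
Proof.
rewrite !vnormE -sqrtCM ?nnegrE ?nq_ge0 //.
rewrite -(sqrCK (normr_ge0 (ip u v))) ler_sqrtC ?nnegrE ?exprn_ge0 ?mulr_ge0 ?nq_ge0 //.
exact: CS.
Qed.

Lemma vnormD u v : vnorm (u + v) <= vnorm u + vnorm v.
Proof.
have ipDr' : forall x y z, ip x (y + z) = ip x y + ip x z.
  move=> x y z; rewrite /ip -big_split; apply: eq_bigr => i _; by rewrite !mxE mulrDr.
have h0 : 0 <= vnorm u + vnorm v by rewrite addr_ge0 ?vnorm_ge0.
rewrite [vnorm (u + v)]vnormE -(sqrCK h0) ler_sqrtC ?nnegrE ?exprn_ge0 ?nq_ge0 //.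
rewrite nq_ip !(ipDl, ipDr') -!nq_ip (ipC u v) !vnormE sqrrD !sqrtCK.
set c := ip u v.
have -> : nq u + c + (c^* + nq v) = nq u + nq v + (c + c^*) by ring.
rewrite -[_ + _ + nq v]addrA [_ *+ 2 + _]addrC addrA lerD2l.
have : c + c^* = 'Re c *+ 2.
  by rewrite ReE -mulr_natr mulfVK // pnatr_eq0.
move=> ->; apply: ler_wMn2r.
have : 'Re c <= `|c| by case: (leif_Re_Creal c).
move=> /le_trans; apply; exact: CS'.
Qed.

Lemma vnormZ a v : vnorm (a *: v) = `|a| * vnorm v.
Proof.
rewrite !vnormE.
have -> : nq (a *: v) = `|a| ^+ 2 * nq v.
  rewrite /nq mulr_sumr; apply: eq_bigr => i _; by rewrite mxE normrM exprMn.
by rewrite sqrtCM ?nnegrE ?exprn_ge0 ?nq_ge0 // sqrCK.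
Qed.

Lemma nq_unitary (U : 'M[C]_m) v : U^t* *m U = 1%:M -> nq (U *m v) = nq v.
Proof.
move=> hU; rewrite !nq_ip !ipE trmx_mul map_mxM -mulmxA (mulmxA _ U) hU mul1mx //.
Qed.

Lemma vnorm_unitary (U : 'M[C]_m) v : U^t* *m U = 1%:M -> vnorm (U *m v) = vnorm v.
Proof. by move=> hU; rewrite !vnormE nq_unitary. Qed.

End VN.



Section CT.
Variable C : numClosedFieldType.
Lemma ctM a b c (A : 'M[C]_(a, b)) (B : 'M[C]_(b, c)) : (A *m B)^t* = B^t* *m A^t*.
Proof. by rewrite trmx_mul map_mxM. Qed.
Lemma ctD a b (A B : 'M[C]_(a, b)) : (A + B)^t* = A^t* + B^t*.
Proof. by rewrite linearD map_mxD. Qed.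
Lemma ctN a b (A : 'M[C]_(a, b)) : (- A)^t* = - A^t*.
Proof. by rewrite linearN map_mxN. Qed.
Lemma ct0 a b : (0 : 'M[C]_(a, b))^t* = 0.
Proof. by rewrite trmx0 map_mx0. Qed.
Lemma ct1 a : (1%:M : 'M[C]_a)^t* = 1%:M.
Proof. by rewrite trmx1 map_mx1. Qed.
Lemma ctS a (x : C) : (x%:M : 'M[C]_a)^t* = (x^*)%:M.
Proof. by rewrite tr_scalar_mx map_scalar_mx. Qed.

Lemma vnorm0 m : vnorm (0 : 'cV[C]_m) = 0.
Proof. by have := vnormZ 0 (0 : 'cV[C]_m); rewrite scale0r normr0 mul0r. Qed.

Lemma mprod_cat m (l1 l2 : seq 'M[C]_m) : mprod (l1 ++ l2) = mprod l1 *m mprod l2.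
Proof. elim: l1 => [|a l IH] /=; first by rewrite mul1mx. by rewrite /mprod /= -/(mprod _) IH mulmxA. Qed.

Lemma mprod_unitary m (l : seq 'M[C]_m) : (forall A, A \in l -> A^t* *m A = 1%:M) ->
  (mprod l)^t* *m mprod l = 1%:M.
Proof.
elim: l => [|a l IH] hl /=; first by rewrite ct1 mul1mx.
rewrite /mprod /= -/(mprod _) ctM -mulmxA (mulmxA _ a) hl ?mem_head // mul1mx IH //.
by move=> A hA; apply: hl; rewrite inE hA orbT.
Qed.

Lemma telescope m (l : seq nat) (X Y : nat -> 'M[C]_m) (b : nat -> C) :
  (forall i, i \in l -> [/\ (X i)^t* *m X i = 1%:M, (Y i)^t* *m Y i = 1%:M &
       specnorm_le (X i - Y i) (b i)]) ->
  specnorm_le (mprod (map X l) - mprod (map Y l)) (\sum_(i <- l) b i).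
Proof.
elim: l => [|i l IH] hl v /=.
  by rewrite big_nil subrr mul0mx vnorm0 mul0r.
have [hX hY hb] := hl i (mem_head _ _).
have hl' : forall j, j \in l -> [/\ (X j)^t* *m X j = 1%:M, (Y j)^t* *m Y j = 1%:M &
       specnorm_le (X j - Y j) (b j)] by move=> j hj; apply: hl; rewrite inE hj orbT.
have hQ : (mprod [seq Y j | j <- l])^t* *m mprod [seq Y j | j <- l] = 1%:M.
  apply: mprod_unitary => A /mapP[j hj ->]; by have [] := hl' j hj.
rewrite /mprod /= -!/(mprod _) big_cons.
have -> : X i *m mprod [seq X j | j <- l] - Y i *m mprod [seq Y j | j <- l] =
   X i *m (mprod [seq X j | j <- l] - mprod [seq Y j | j <- l]) + (X i - Y i) *m mprod [seq Y j | j <- l].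
  by rewrite mulmxBr mulmxBl addrA subrK.
rewrite mulmxDl; apply: le_trans (vnormD _ _) _.
rewrite -mulmxA vnorm_unitary // -mulmxA mulrDl addrC; apply: lerD.
  by apply: le_trans (hb _) _; rewrite vnorm_unitary.
exact: IH.
Qed.

End CT.



Section Real.
Variable C : numClosedFieldType.
Variable m : nat.
Variable p : nat -> C.
Variable H : nat -> 'cV[C]_m.

Definition good N (F : 'M[C]_N) (G : 'M[C]_(N, m)) (Hb : 'M[C]_(m, N)) (Jr : 'M[C]_m)
  (l : seq nat) : Prop :=
 [/\ F + F^t* + G *m G^t* = 0, G = - (Hb^t* *m Jr), Jr^t* *m Jr = 1%:M,
   (forall z, 0 <= 'Re z -> z%:M - F \in unitmx) &
   (forall s, all (fun i => s != p i) l -> s%:M - F \in unitmx ->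
      tf F G Hb Jr s = mprod [seq Kt p H i s | i <- l])].

Lemma good_nil : good (0 : 'M[C]_0) 0 0 1%:M [::].
Proof.
split.
- by apply/matrixP => -[].
- by apply/matrixP => -[].
- by rewrite ct1 mul1mx.
- by move=> z _; rewrite unitmxE det_mx00 unitr1.
- by move=> s _ _; rewrite /tf /= !mul0mx add0r.
Qed.

Lemma series N1 N2 F1 G1 H1 J1 F2 G2 H2 J2 l1 l2 :
  @good N1 F1 G1 H1 J1 l1 -> @good N2 F2 G2 H2 J2 l2 ->
  good (block_mx F1 0 (G2 *m H1) F2) (col_mx G1 (G2 *m J1)) (row_mx (J2 *m H1) H2)
     (J2 *m J1) (l2 ++ l1).
Proof.
move=> [e1 g1 j1 u1 t1] [e2 g2 j2 u2 t2].
have j1' : J1 *m J1^t* = 1%:M by apply: mulmx1C.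
have blk : forall z, z%:M - block_mx F1 0 (G2 *m H1) F2 =
   block_mx (z%:M - F1) 0 (- (G2 *m H1)) (z%:M - F2).
  by move=> z; rewrite (scalar_mx_block N1 N2 z) opp_block_mx add_block_mx oppr0 addr0 add0r.
have unitb : forall z, (z%:M - block_mx F1 0 (G2 *m H1) F2 \in unitmx) =
   (z%:M - F1 \in unitmx) && (z%:M - F2 \in unitmx).
  by move=> z; rewrite blk !unitmxE det_lblock unitrM.
split.
- rewrite tr_block_mx map_block_mx tr_col_mx map_row_mx mul_col_row !add_block_mx.
  rewrite -[RHS]block_mx0; congr block_mx.
  + exact: e1.
  + rewrite add0r !ctM g1 mulNmx -mulmxA (mulmxA J1) j1' mul1mx.
    by rewrite subrr.
  + rewrite ct0 addr0 g1 ctN ctM trmxCK mulmxN -mulmxA (mulmxA J1) j1' mul1mx.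
    by rewrite subrr.
  + by rewrite ctM !mulmxA -(mulmxA G2) j1' mulmx1.
- rewrite tr_row_mx map_col_mx mul_col_mx opp_col_mx g1 g2 !ctM.
  by rewrite mulNmx !mulmxA -(mulmxA _ (J2^t*)) j2 mulmx1.
- by rewrite ctM -mulmxA (mulmxA _ J2) j2 mul1mx.
- by move=> z hz; rewrite unitb u1 // u2.
move=> s; rewrite all_cat => /andP[a2 a1]; rewrite unitb => /andP[uA uB].
rewrite map_cat mprod_cat -t2 // -t1 //.
set A := s%:M - F1; set B := s%:M - F2; set X := G2 *m H1.
set Q := block_mx (invmx A) 0 (invmx B *m X *m invmx A) (invmx B).
have MQ : (s%:M - block_mx F1 0 X F2) *m Q = 1%:M.
  rewrite blk mulmx_block !mulmx0 !mul0mx !addr0 add0r mulmxV // mulmxV //.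
  rewrite !mulmxA mulmxV // mul1mx mulNmx addNr.
  by rewrite [RHS](scalar_mx_block N1 N2).
have hinv : invmx (s%:M - block_mx F1 0 X F2) = Q.
  have [uM _] := mulmx1_unit MQ.
  by rewrite -[LHS]mul1mx -(mulmx1C MQ) -mulmxA mulmxV // mulmx1.
rewrite /tf hinv mul_row_block mul_row_col !mulmx0 add0r.
rewrite !mulmxDl !mulmxDr !mulmxA -/A -/B addrA; congr (_ + _).
by rewrite [RHS]addrC addrA.
Qed.

Definition hyp i := H i != 0 /\ (H i)^t* *m H i = (- (p i + (p i)^*))%:M.

Lemma nq_hyp i : hyp i -> nq (H i) = - (p i + (p i)^*).
Proof. by case=> _ e; rewrite nq_ip ipE e mxE eqxx mulr1n. Qed.

Lemma Rep_neg i : hyp i -> 'Re (p i) < 0.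
Proof.
move=> h; have e := nq_hyp h.
have gt0 : 0 < nq (H i).
  rewrite lt_def nq_ge0 andbT; apply/eqP => /nq_eq0 h0; by case: h => /eqP hn _; apply: hn.
rewrite ReE pmulr_llt0 ?invr_gt0 ?ltr0n // -oppr_gt0 -e //.
Qed.

Lemma neq_p i z : hyp i -> 0 <= 'Re z -> z != p i.
Proof.
move=> h hz; apply/eqP => ez; have := Rep_neg h; rewrite -ez.
by move=> hlt; have := lt_le_trans hlt hz; rewrite ltxx.
Qed.

Lemma good_cav i : hyp i ->
  good ((p i)%:M : 'M[C]_1) (- (H i)^t*) (H i) 1%:M [:: i].
Proof.
move=> h; have [hn e] := h; split.
- rewrite ctN trmxCK mulNmx mulmxN opprK e ctS.
  apply/matrixP => a b; rewrite !mxE -!mulrnDl.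
  by rewrite subrr mul0rn.
- by rewrite mulmx1.
- by rewrite ct1 mul1mx.
- move=> z hz; rewrite unitmxE det_mx11 !mxE /= !mulr1n unitfE subr_eq0.
  exact: neq_p.
move=> s /= /andP[hs _] _; rewrite /tf.
have -> : s%:M - (p i)%:M = (s - p i)%:M :> 'M[C]_1.
  by apply/matrixP => a b; rewrite !mxE mulrnBl.
rewrite invmx_scalar mul_mx_scalar -scalemxAl /mprod /= mulmx1 addrC.
congr (_ + _); by rewrite mulmxN scalerN -scaleNr -invrN opprB.
Qed.

Lemma build (l : seq nat) : (forall i, i \in l -> hyp i) ->
  exists N (F : 'M[C]_N) G Hb Jr, good F G Hb Jr l.
Proof.
elim: l => [|i l IH] hl.
  by exists 0%N, 0, 0, 0, 1%:M; exact: good_nil.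
have [N [F [G [Hb [Jr g]]]]] := IH (fun j hj => hl j (@mem_behead _ (i :: l) j hj)).
have gc := good_cav (hl i (mem_head _ _)).
by exists (N + 1)%N; eexists; eexists; eexists; eexists; exact: (series g gc).
Qed.

Lemma ctZ a b (x : C) (A : 'M[C]_(a, b)) : (x *: A)^t* = x^* *: A^t*.
Proof. by rewrite linearZ map_mxZ. Qed.

Lemma Kt_unitary i s : hyp i -> s^* = - s -> (Kt p H i s)^t* *m Kt p H i s = 1%:M.
Proof.
move=> [_ e] hs; rewrite /Kt.
set c := (p i - s)^-1; set X := H i *m (H i)^t*.
have XX : X^t* = X by rewrite /X ctM trmxCK.
have X2 : X *m X = (- (p i + (p i)^*)) *: X.
  by rewrite /X mulmxA -(mulmxA (H i)) e mul_mx_scalar scalemxAl.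
rewrite ctD ct1 ctZ XX mulmxDl !mulmxDr !mul1mx mulmx1 -scalemxAl -scalemxAr X2.
rewrite !scalerA -addrA -!scalerDl.
suff -> : c + (c^* + c^* * c * - (p i + (p i)^*)) = 0 by rewrite scale0r addr0.
rewrite /c; set x := p i - s.
have xc : x^* = (p i)^* + s by rewrite /x rmorphB /= hs opprK.
have hx : - (p i + (p i)^*) = - (x + x^*) by rewrite xc /x; congr (- _); ring.
rewrite hx.
have [->|x0] := eqVneq x 0; first by rewrite !(invr0, rmorph0, mul0r, mulr0, addr0, oppr0).
have x0' : x^* != 0 by rewrite conjC_eq0.
rewrite fmorphV; field.
by rewrite x0 x0'.
Qed.

Definition bnd (w : C) i := w * (- (p i + (p i)^*)) / (`|p i| * `|p i - 'i * w|).

Lemma Kt_bound i w : hyp i -> 0 <= w ->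
  specnorm_le (Kt p H i ('i * w) - Kt p H i 0) (bnd w i).
Proof.
move=> h hw v; have [_ e] := h.
set s := 'i * w.
have hRe : 0 <= 'Re s.
  by rewrite ReE /s rmorphM /= conjCi conj_Creal ?ger0_real // mulNr subrr mul0r.
have ps : p i - s != 0 by rewrite subr_eq0 eq_sym (neq_p h hRe).
have p0 : p i != 0 by rewrite eq_sym (neq_p h) // ReE rmorph0 addr0 mul0r.
rewrite /Kt subr0 opprD addrACA subrr add0r -scalerBl.
set a := _ - _.
have ea : a = s / ((p i - s) * p i) by rewrite /a; field; rewrite ps p0.
rewrite -scalemxAl -mulmxA (mx11_scalar ((H i)^t* *m v)) -ipE mul_mx_scalar scalerA.
rewrite vnormZ normrM.
have hn : `|a| = w / (`|p i - s| * `|p i|).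
  by rewrite ea normf_div normrM /s normrM normCi mul1r ger0_norm.
apply: (@le_trans _ _ (`|a| * ((vnorm (H i) * vnorm v) * vnorm (H i)))).
  rewrite -[`|a| * _ * _]mulrA; apply: ler_wpM2l; first exact: normr_ge0.
  by apply: ler_wpM2r; [exact: vnorm_ge0| exact: CS'].
have -> : vnorm (H i) * vnorm v * vnorm (H i) = nq (H i) * vnorm v.
  by rewrite mulrAC -expr2 vnormE sqrtCK.
rewrite nq_hyp // hn /bnd -/s [`|p i| * _]mulrC.
rewrite le_eqVlt; apply/orP; left; apply/eqP; ring.
Qed.

End Real.



Section Aux.
Variable C : numClosedFieldType.

Lemma conj_iw (w : C) : w \is Num.real -> ('i * w)^* = - ('i * w).
Proof. by move=> wr; rewrite rmorphM /= conjCi conj_Creal // mulNr. Qed.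

Lemma Re_iw (w : C) : w \is Num.real -> 'Re ('i * w) = 0.
Proof. by move=> wr; rewrite ReE conj_iw // subrr mul0r. Qed.

Lemma esym0 n (p : nat -> C) (x : 'I_n.+1) : Defs.esym p [set x] 0 = 1.
Proof.
rewrite /Defs.esym (big_pred1 set0); first by rewrite big_set0.
by move=> T /=; rewrite cards_eq0; case: eqP => [->|]; rewrite ?sub0set ?andbF.
Qed.

Lemma Cterm1 n (p : nat -> C) (x : 'I_n.+1) w :
  Cterm p [set x] w = (- (p x + (p x)^*)) / (`|p x| * `|p x - 'i * w|).
Proof.
rewrite /Cterm cards1 big_ord1 subnn expr0 mul1r esym0 normr1 mul1r !big_set1 //.
Qed.

Lemma reindex1 n r (F : {set 'I_n.+1} -> C) :
  \sum_(S : {set 'I_n.+1} | (#|S| == 1%N) && [forall i in S, (r < i)%N]) F S =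
  \sum_(x : 'I_n.+1 | (r < x)%N) F [set x].
Proof.
rewrite (reindex_onto (fun x : 'I_n.+1 => [set x]) (fun S => odflt ord0 [pick x in S])).
  apply: eq_big => [x|x _] //=.
  rewrite cards1 eqxx /=.
  have -> : [pick y in [set x]] = Some x.
    case: pickP => [z /set1P -> //|h0]; by have := h0 x; rewrite set11.
  rewrite eqxx andbT; apply/forall_inP/idP => [h0|h0 i /set1P ->] //.
  exact: h0 _ (set11 x).
move=> S /andP[/cards1P[y ->] _].
case: pickP => [z /set1P -> //|h0]; by have := h0 y; rewrite set11.
Qed.
End Aux.

Theorem theorem4 (C : numClosedFieldType) (m n r : nat)
  (hm : (0 < m)%N) (hr : (0 < r)%N) (hrn : (r < n)%N)
  (J : 'M[C]_m) (p : nat -> C) (H : nat -> 'cV[C]_m)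
  (hJ : J \is unitarymx)
  (hH0 : forall i, (1 <= i <= n)%N -> H i != 0)
  (hHp : forall i, (1 <= i <= n)%N -> (H i)^t* *m H i = (- (p i + (p i)^*))%:M) :
  (exists (N : nat) (F : 'M[C]_N) (G : 'M[C]_(N, m)) (Hb : 'M[C]_(m, N)) (Jr : 'M[C]_m),
     [/\ phys_realizable F G Hb Jr,
         lossless_bounded_real F G Hb Jr &
         forall s : C, (forall i, (1 <= i <= r)%N -> s != p i) ->
           s%:M - F \in unitmx ->
           Kapprox n r J p H s = tf F G Hb Jr s])
  /\
  (forall w : C, 0 <= w ->
     specnorm_le (Kfull n J p H ('i * w) - Kapprox n r J p H ('i * w))
       (\sum_(1 <= k < (n - r).+1) Bterm n r p k w)).
Proof.
have hyp_of : forall i, (1 <= i <= n)%N -> hyp p H i by move=> i hi; split; [exact: hH0|exact: hHp].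
have hJ' : J^t* *m J = 1%:M by apply: mulmx1C; apply/unitarymxP.
have KtU : forall i s, (1 <= i <= n)%N -> s^* = - s -> (Kt p H i s)^t* *m Kt p H i s = 1%:M.
  by move=> i s hi hs; apply: Kt_unitary => //; exact: hyp_of.
have c0 : (0 : C)^* = - 0 by rewrite rmorph0 oppr0.
have hJa : (Ja n r J p H)^t* *m Ja n r J p H = 1%:M.
  rewrite /Ja ctM -mulmxA (mulmxA (J^t*)) hJ' mul1mx; apply: mprod_unitary.
  move=> A /mapP[i]; rewrite mem_rev mem_iota => hi ->; apply: KtU c0; lia.
have mprodU : forall s, s^* = - s ->
    (mprod [seq Kt p H i s | i <- rev (iota 1 r)])^t* *m mprod [seq Kt p H i s | i <- rev (iota 1 r)] = 1%:M.
  move=> s hs; apply: mprod_unitary.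
  move=> A /mapP[i]; rewrite mem_rev mem_iota => hi ->; apply: KtU hs; lia.
split.
  have hl : forall i, i \in rev (iota 1 r) -> hyp p H i.
    by move=> i; rewrite mem_rev mem_iota => hi; apply: hyp_of; lia.
  have [N [F [G [Hb [Jr [e g j u t]]]]]] := build hl.
  have tfU : forall s, tf F G (Ja n r J p H *m Hb) (Ja n r J p H *m Jr) s =
      Ja n r J p H *m tf F G Hb Jr s by move=> s; rewrite /tf mulmxDr !mulmxA.
  exists N, F, G, (Ja n r J p H *m Hb), (Ja n r J p H *m Jr); split.
  - exists 1%:M; split.
    + split; first exact: ct1.
      move=> v hv; rewrite mulmx1 -ipE -nq_ip lt_def nq_ge0 andbT.
      by apply/eqP => /nq_eq0 h0; rewrite h0 eqxx in hv.
    + by rewrite mulmx1 mul1mx.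
    + by rewrite mul1mx ctM -mulmxA (mulmxA _ (Ja n r J p H)) hJa mul1mx.
    + by rewrite ctM -mulmxA (mulmxA _ (Ja n r J p H)) hJa mul1mx.
  - split.
      move=> l /eigenvalueP [v hv v0].
      rewrite real_ltNge ?Creal_Re ?real0 //; apply/negP => hl0.
      have U := u l hl0.
      have : v *m (l%:M - F) = 0 by rewrite mulmxBr hv mul_mx_scalar subrr.
      move=> /(congr1 (mulmx^~ (invmx (l%:M - F)))).
      rewrite -mulmxA mulmxV // mulmx1 mul0mx => v0'.
      by rewrite v0' eqxx in v0.
    move=> w wr; set s := 'i * w.
    have hRe : 0 <= 'Re s by rewrite Re_iw.
    rewrite tfU t ?u //.
      rewrite ctM -mulmxA (mulmxA _ (Ja n r J p H)) hJa mul1mx.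
      by apply: mprodU; rewrite conj_iw.
    apply/allP => i; rewrite mem_rev mem_iota => hi; apply: neq_p hRe; apply: hyp_of; lia.
  - move=> s hs hu; rewrite tfU t // /Kapprox //.
    apply/allP => i; rewrite mem_rev mem_iota => hi; apply: hs; lia.
move=> w hw; set s := 'i * w; move=> v.
have wr : w \is Num.real by rewrite ger0_real.
have hsplit : rev (iota 1 n) = rev (iota r.+1 (n - r)) ++ rev (iota 1 r).
  by rewrite -rev_cat -[r.+1]add1n -iotaD subnKC // ltnW.
rewrite /Kfull /Kapprox /Ja hsplit map_cat mprod_cat.
set PX := mprod _; set Q := mprod _; set PY := mprod _.
have -> : J *m (PX *m Q) - J *m PY *m Q = J *m ((PX - PY) *m Q).
  by rewrite mulmxBl mulmxBr !mulmxA.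
have hQ : Q^t* *m Q = 1%:M by apply: mprodU; rewrite conj_iw.
rewrite -mulmxA vnorm_unitary // -mulmxA.
have T := @telescope C m (rev (iota r.+1 (n - r))) (fun i => Kt p H i s) (fun i => Kt p H i 0) (bnd p w).
apply: le_trans (T _ _) _.
  move=> i; rewrite mem_rev mem_iota => hi.
  have hi' : (1 <= i <= n)%N by lia.
  split; [apply: KtU; rewrite ?conj_iw // | apply: KtU | ] => //.
  exact: Kt_bound (hyp_of i hi') hw.
rewrite vnorm_unitary //; apply: ler_wpM2r; first exact: vnorm_ge0.
rewrite big_rev.
have -> : iota r.+1 (n - r) = index_iota r.+1 n.+1 by rewrite /index_iota subSS.
rewrite big_geq_mkord big_ltn; last by lia.
rewrite -[X in X <= _]addr0; apply: lerD.
  rewrite /Bterm reindex1 mulr_sumr le_eqVlt; apply/orP; left; apply/eqP.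
  apply: eq_big => [x //|x _].
  by rewrite Cterm1 /bnd mulrA.
apply: sumr_ge0 => k _; rewrite /Bterm; apply: mulr_ge0 => //.
apply: sumr_ge0 => S /andP[_ /forall_inP hS].
rewrite /Cterm; apply: divr_ge0.
  apply: mulr_ge0; first exact: normr_ge0.
  apply: prodr_ge0 => l hl; have := hS l hl => hrl.
  have hl' : (1 <= l <= n)%N by have := ltn_ord l; lia.
  by rewrite -(nq_hyp (hyp_of l hl')) nq_ge0.
by apply: prodr_ge0 => l _; rewrite mulr_ge0.
Qed.
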